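(* Let $a\ge 2$ be an integer. Then there are no integers $n\ge 0$ and $c$ such that $B_{n+a}(t)-B_n(t)=c$ as polynomials in $t$.
   Context: The Stern polynomials $B_n(t)\in\mathbb{Z}[t]$, $n\ge 0$, are defined by $B_0(t)=0$, $B_1(t)=1$, $B_{2n}(t)=tB_n(t)$ and $B_{2n+1}(t)=B_n(t)+B_{n+1}(t)$ for $n\ge 1$. *)

(* Defs.v *)
From HB Require Import structures.
From mathcomp Require Import all_boot all_order all_algebra.
Set Implicit Arguments. Unset Strict Implicit. Unset Printing Implicit Defensive.
Import GRing.Theory.
Local Open Scope ring_scope.

(* Fuel-based recursion: with enough fuel (k > n), stern_aux k n = B_n. *)
Fixpoint stern_aux (k n : nat) : {poly int} :=
  match k with
  | 0 => 0
  | k'.+1 =>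
    if n == 0%N then 0
    else if n == 1%N then 1
    else if ~~ odd n then 'X * stern_aux k' n./2
    else stern_aux k' n./2 + stern_aux k' n./2.+1
  end.

Definition stern (n : nat) : {poly int} := stern_aux n.+1 n.

Example stern_check : [/\ stern 0 = 0, stern 1 = 1, stern 2 = 'X * 1,
  stern 3 = 1 + 'X * 1 & stern 5 = 'X * 1 + (1 + 'X * 1)].
Proof. by split. Qed.

(* Main.v *)
Require Import Defs.
From HB Require Import structures.
From mathcomp Require Import all_boot all_order all_algebra.
Import GRing.Theory.
Local Open Scope ring_scope.

Lemma stern_aux_eval (k n : nat) : (n < k)%N ->
  (stern_aux k n).[2] = n%:Z /\ (stern_aux k n).[0] = (odd n)%:Z.
Proof.
elim: k n => [|k IH] n //= hn.
case: eqP => [->|n0]; first by rewrite !hornerE.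
case: eqP => [->|n1]; first by rewrite !hornerE.
have hn2 : (2 <= n)%N by case: n n0 n1 {hn} => [|[|]].
rewrite ltnS in hn.
have hh : (n./2 < k)%N.
  apply: leq_trans hn; rewrite ltn_half_double -addnn -{1}(add0n n) ltn_add2r.
  by apply: leq_trans hn2.
have hdec := odd_double_half n.
case: ifP => hodd.
  have [e2 e0] := IH _ hh.
  rewrite !hornerE e2 ?e0; split; last by rewrite ?mul0r (negbTE hodd).
  rewrite -[in RHS]hdec (negbTE hodd) add0n -addnn.
  by rewrite PoszD mulrDl mul1r.
move/negbFE: hodd => hodd.
have hh' : (n./2.+1 < k)%N.
  apply: leq_trans hn.
  rewrite -[in X in (_ <= X)%N]hdec hodd -addnn add1n ltnS -addn1 leq_add2l.
  case: (n./2) hdec => [|m] //.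
  by move=> h; move: hn2; rewrite -h hodd.
have [e2 e0] := IH _ hh.
have [f2 f0] := IH _ hh'.
rewrite !hornerE e2 e0 f2 f0; split.
  by rewrite -[in RHS]hdec hodd -addnn !PoszD addrC.
rewrite hodd /=.
by case: (odd n./2).
Qed.

Theorem corollary5p3 (a : nat) : (2 <= a)%N ->
  ~ exists (n : nat) (c : int), stern (n + a) - stern n = c%:P.
Proof.
move=> ha [n [c h]].
have [a2 a0] := @stern_aux_eval _ _ (ltnSn (n + a)).
have [b2 b0] := @stern_aux_eval _ _ (ltnSn n).
have h2 := congr1 (fun p : {poly int} => p.[2]) h.
have h0 := congr1 (fun p : {poly int} => p.[0]) h.
rewrite /stern /= !hornerE in h2 h0.
rewrite a2 b2 PoszD addrAC subrr add0r in h2.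
rewrite a0 b0 -h2 in h0.
move: h0 ha; case: (odd (n + a)); case: (odd n) => /=.
all: rewrite ?subrr ?subr0 ?sub0r.
all: by case: a {h2 a2 a0 h} => [|[|a]].
Qed.
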